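(* Let $a\in[-1,1/3]$, $a\neq0$. For $\theta\in(2\pi/3,\pi)$ define \[ \zeta(\theta)=\frac{(2a-1)\cos\theta+\sqrt{(1-4a)\cos^2\theta+a}}{1-4a\cos^2\theta},\qquad z(\theta)=\frac{a\zeta(\theta)}{(2\cos\theta+\zeta(\theta))(1+2\zeta(\theta)\cos\theta)}, \] with $z$ extended by continuity at the removable singularity $\theta=\cos^{-1}(-1/(2\sqrt a))$ when $1/4<a\le1/3$. Then $z$ maps $(2\pi/3,\pi)$ onto the interior of \[ I_a=\left(-\infty,\ \frac{-2+9a-2\sqrt{(1-3a)^3}}{27}\right], \] i.e. onto $\left(-\infty,\frac{-2+9a-2\sqrt{(1-3a)^3}}{27}\right)$. *)

(* Defs.v *)
From Stdlib Require Import Reals Lra.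
Open Scope R_scope.

Definition zeta (a t : R) : R :=
  ((2*a - 1) * cos t + sqrt ((1 - 4*a) * (cos t)^2 + a)) / (1 - 4*a*(cos t)^2).

Definition zfun (a t : R) : R :=
  a * zeta a t / ((2 * cos t + zeta a t) * (1 + 2 * zeta a t * cos t)).

Definition zdefined (a t : R) : Prop :=
  1 - 4*a*(cos t)^2 <> 0 /\
  (2 * cos t + zeta a t) * (1 + 2 * zeta a t * cos t) <> 0.

Definition Ia_end (a : R) : R := (-2 + 9*a - 2 * sqrt ((1 - 3*a)^3)) / 27.

(* Main.v *)
Require Import Defs.
From Stdlib Require Import Reals Lra Psatz.
Open Scope R_scope.

Definition Pp a s := s^3 - s^2 + a*s.
Definition Sc a c := (1 - 2*c^2 - 2*c*sqrt((1-4*a)*c^2+a)) / (1 - 4*c^2).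

Lemma cP a : continuity (Pp a).
Proof. unfold Pp. reg. Qed.

Lemma cS a c : 1 - 4*c^2 <> 0 -> 0 <= (1-4*a)*c^2+a -> continuity_pt (Sc a) c.
Proof. intros H1 H2. unfold Sc. reg. Qed.

Lemma cos_range t : 2*PI/3 < t < PI -> -1 < cos t < -1/2.
Proof.
  intros [h1 h2]. pose proof PI_RGT_0.
  assert (E: cos (2*PI/3) = -1/2).
  { replace (2*PI/3) with (PI - PI/3) by field.
    rewrite Rtrigo_facts.cos_pi_minus, cos_PI3. lra. }
  split.
  - rewrite <- cos_PI. apply cos_decreasing_1; lra.
  - rewrite <- E. apply cos_decreasing_1; lra.
Qed.

Lemma D_pos a c : -1 <= a -> a <= 1/3 -> -1 < c < -1/2 -> 0 < (1-4*a)*c^2+a.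
Proof. intros h1 h2 [c1 c2].
  assert (4*c^2 - 1 > 0) by nra. assert (1 - c^2 > 0) by nra.
  destruct (Rle_lt_dec 0 a).
  - assert ((1/3 - a)*(4*c^2-1) >= 0) by nra. nra.
  - assert ((-a)*(4*c^2-1) > 0) by nra. nra.
Qed.

Lemma r_facts a : a <= 1/3 -> -1 <= a ->
  let r := sqrt (1-3*a) in 0 <= r /\ r*r = 1-3*a /\ r <= 2 /\
  sqrt ((1-3*a)^3) = r^3.
Proof.
  intros h1 h2 r.
  assert (0 <= r) by apply sqrt_pos.
  assert (rr: r*r = 1-3*a) by (apply sqrt_sqrt; lra).
  clearbody r.
  repeat split; auto.
  - nra.
  - apply sqrt_lem_1; [rewrite <- rr; ring_simplify; apply pow_le; nra| apply pow_le; lra |]. replace ((1-3*a)^3) with ((r*r)^3) by (rewrite rr; ring). ring.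
Qed.

Lemma Pp_id a r s : r*r = 1-3*a ->
  Pp a s - (-2 + 9*a - 2*r^3)/27 = (s - (1+r)/3)^2 * (s - (1-2*r)/3).
Proof.
  intros h. unfold Pp. replace a with ((1-r*r)/3) by lra. field.
Qed.

Lemma fwd a c : -1 <= a -> a <= 1/3 -> -1 < c < -1/2 -> Pp a (Sc a c) < Ia_end a.
Proof.
  intros ha1 ha2 hc.
  pose proof (D_pos a c ha1 ha2 hc) as HD.
  set (D := (1-4*a)*c^2+a) in *.
  set (w := sqrt D).
  assert (w0 : 0 <= w) by apply sqrt_pos.
  assert (Hw : w*w = D) by (apply sqrt_sqrt; lra).
  set (S := Sc a c).
  assert (e1n: 1 - 4*c^2 < 0) by nra.
  assert (hS: S * (1-4*c^2) = 1 - 2*c^2 - 2*c*w).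
  { unfold S, Sc. fold D. fold w. field. lra. }
  assert (S13: S < 1/3).
  { assert (S*(1-4*c^2) > (1-4*c^2)/3) by nra. nra. }
  assert (X: (1-4*c^2) * ((1-S)^2 - 4*c^2*(S^2-S+a)) = 0).
  { assert (E: (1-4*c^2) * ((1-S)^2 - 4*c^2*(S^2-S+a)) =
      (S*(1-4*c^2) - (1-2*c^2))^2 - 4*c^2*(w*w) + 4*c^2*(w*w - D)) by (unfold D; ring).
    rewrite E, hS. replace (w*w - D) with 0 by lra. ring. }
  apply Rmult_integral in X. destruct X as [X|X]; [lra|].
  assert (0 < (1-S)^2) by nra.
  assert (0 < c^2) by nra.
  assert (q0: 0 < S^2 - S + a) by nra.
  assert (1 - c^2 > 0) by nra.
  assert (0 < (S^2-S+a)*(1-c^2)) by (apply Rmult_lt_0_compat; lra).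
  assert (Q3: 3*S^2 - 2*S + 4*a - 1 > 0) by nra.
  destruct (r_facts a ha2 ha1) as [r0 [rr [r2 rs]]].
  set (r := sqrt (1-3*a)) in *.
  unfold Ia_end. rewrite rs.
  assert (F: 3*S^2 - 2*S + 4*a - 1 = 3*(S - (1-2*r)/3)*(S-(1+2*r)/3)).
  { replace a with ((1-r*r)/3) by lra. field. }
  assert (S - (1-2*r)/3 < 0) by nra.
  pose proof (Pp_id a r S rr).
  assert (0 < (S - (1+r)/3)^2) by nra.
  nra.
Qed.

Lemma exists_m q : 0 < q -> exists m, 0 < m /\ m*m = q.
Proof. intros. exists (sqrt q). split. apply sqrt_lt_R0; auto. apply sqrt_sqrt; lra. Qed.

Lemma bwd a y : -1 <= a -> a <= 1/3 -> y < Ia_end a ->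
  exists c, -1 < c < -1/2 /\ Pp a (Sc a c) = y.
Proof.
  intros ha1 ha2 hy.
  destruct (r_facts a ha2 ha1) as [r0 [rr [r2 rs]]].
  set (r := sqrt (1-3*a)) in *. clearbody r.
  unfold Ia_end in hy. rewrite rs in hy.
  set (s0 := (1-2*r)/3).
  assert (P0: Pp a s0 = (-2 + 9*a - 2*r^3)/27).
  { pose proof (Pp_id a r s0 rr). unfold s0 in *. 
    replace (((1 - 2 * r) / 3 - (1 - 2 * r) / 3)) with 0 in H by ring. lra. }
  set (s1 := Rmin (-1) y - 1).
  assert (s1a: s1 <= -2) by (unfold s1; pose proof (Rmin_l (-1) y); lra).
  assert (s1b: s1 < y) by (unfold s1; pose proof (Rmin_r (-1) y); lra).
  assert (Ps1: Pp a s1 <= s1).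
  { unfold Pp. assert (s1^2 - s1 + a >= 1) by nra. nra. }
  destruct (IVT (fun x => Pp a x - y) s1 s0) as [s [[hs1 hs2] hs]].
  - intro x. apply continuity_pt_minus. apply cP. apply continuity_pt_const. intros u v; reflexivity.
  - unfold s0; lra.
  - lra.
  - lra.
  - simpl in hs.
    assert (hs3: s < s0).
    { destruct (Rle_lt_or_eq_dec s s0 hs2) as [h|h]; auto. subst s. lra. }
    unfold s0 in hs3.
    assert (F: 3*s^2 - 2*s + 4*a - 1 = 3*(s - (1-2*r)/3)*(s-(1+2*r)/3)).
    { replace a with ((1-r*r)/3) by lra. field. }
    assert (Q3: 3*s^2 - 2*s + 4*a - 1 > 0) by nra.
    assert (0 < (1-s)^2) by nra.
    assert (q0: 0 < s^2 - s + a) by nra.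
    destruct (exists_m (s^2 - s + a)) as [m [m0 mm]]; [lra|].
    assert (s13: s < 1/3) by lra.
    assert (A1: 1 - s > m) by nra.
    assert (A2: 1 - s < 2*m) by nra.
    exists (-(1-s)/(2*m)). split.
    { split; apply (Rmult_lt_reg_r (2*m)); try lra; field_simplify; lra. }
    assert (Hsq: sqrt ((1-4*a)*(-(1-s)/(2*m))^2 + a) = (1-s-2*a)/(2*m)).
    { apply sqrt_lem_1.
      - apply Rle_trans with (((1-s-2*a)/(2*m))*((1-s-2*a)/(2*m))). 
        apply Rle_0_sqr. right. replace a with (m*m - s^2 + s) by lra. field. lra.
      - apply Rmult_le_pos; [lra|]. apply Rlt_le, Rinv_0_lt_compat. lra.
      - replace a with (m*m - s^2 + s) by lra. field. lra. }
    unfold Sc. rewrite Hsq.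
    assert (E: (1 - 2*(-(1-s)/(2*m))^2 - 2*(-(1-s)/(2*m))*((1-s-2*a)/(2*m))) / (1 - 4*(-(1-s)/(2*m))^2) = s).
    { replace a with (m*m - s^2 + s) by lra. field. split; [lra|nra]. }
    rewrite E. lra.
Qed.

Lemma agree a t : -1 <= a -> a <= 1/3 -> -1 < cos t < -1/2 -> zdefined a t ->
  Pp a (Sc a (cos t)) = zfun a t.
Proof.
  intros ha1 ha2 hc [he hden].
  unfold zfun, zeta in *. unfold Sc.
  pose proof (D_pos a (cos t) ha1 ha2 hc) as HD.
  set (c := cos t) in *. clearbody c.
  assert (Hw : sqrt ((1-4*a)*c^2+a) * sqrt ((1-4*a)*c^2+a) = (1-4*a)*c^2+a) by (apply sqrt_sqrt; lra).
  set (w := sqrt ((1-4*a)*c^2+a)) in *. clearbody w.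
  set (z := ((2*a-1)*c + w)/(1 - 4*a*c^2)) in *.
  assert (hz: z*(1 - 4*a*c^2) = (2*a-1)*c + w) by (unfold z; field; auto).
  clearbody z.
  assert (e1n: 1 - 4*c^2 <> 0) by nra.
  set (S := (1 - 2*c^2 - 2*c*w)/(1 - 4*c^2)).
  assert (hS: S * (1-4*c^2) = 1 - 2*c^2 - 2*c*w) by (unfold S; field; auto).
  clearbody S.
  set (e := 1 - 4*a*c^2) in *.
  assert (Q: e * (e*z^2 - 2*(2*a-1)*c*z - a) = 0).
  { replace (e * (e*z^2 - 2*(2*a-1)*c*z - a)) with ((z*e)^2 - 2*(2*a-1)*c*(z*e) - a*e) by ring.
    rewrite hz. unfold e. replace (((2 * a - 1) * c + w) ^ 2 - 2 * (2 * a - 1) * c * ((2 * a - 1) * c + w) -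
    a * (1 - 4 * a * c ^ 2)) with (w*w - ((1-4*a)*c^2+a)) by ring.
    lra. }
  apply Rmult_integral in Q. destruct Q as [Q|Q]; [contradiction|].
  set (u := 1 + 2*z*c).
  assert (Q2: z^2 + 2*c*z = a*u^2) by (unfold u, e in *; nra).
  assert (hu: u * e = 1 - 2*c^2 + 2*c*w).
  { unfold u. replace ((1 + 2*z*c)*e) with (e + 2*c*(z*e)) by ring. rewrite hz. unfold e. ring. }
  assert (Su: (S*u - 1) * ((1-4*c^2)*e) = 0).
  { replace ((S*u - 1) * ((1-4*c^2)*e)) with ((S*(1-4*c^2))*(u*e) - (1-4*c^2)*e) by ring.
    rewrite hS, hu. unfold e.
    replace ((1 - 2 * c ^ 2 - 2 * c * w) * (1 - 2 * c ^ 2 + 2 * c * w) - (1 - 4 * c ^ 2) * (1 - 4 * a * c ^ 2))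
      with (4*c^2*((1-4*a)*c^2+a - w*w)) by ring.
    rewrite Hw. ring. }
  apply Rmult_integral in Su. destruct Su as [Su|Su].
  2:{ apply Rmult_integral in Su. destruct Su; contradiction. }
  assert (u0: u <> 0).
  { intro h. rewrite h in Su. lra. }
  fold u in hden.
  assert (hd: (2*c+z)*u <> 0) by exact hden.
  assert (z2: 2*c+z <> 0) by (intro h; apply hd; rewrite h; ring).
  assert (HS: S = /u) by (apply (Rmult_eq_reg_r u); [|auto]; rewrite Rinv_l; lra).
  rewrite HS. unfold Pp. field_simplify_eq; [| split; auto].
  replace (u ^ 2 * a * z + 2 * u ^ 2 * a * c - u * z - 2 * u * c + z + 2 * c) with
    ((a*u^2)*(z+2*c) - u*(z+2*c) + z + 2*c) by ring.
  replace (u ^ 2 * a * z) with ((a*u^2)*z) by ring.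
  rewrite <- Q2. unfold u. ring.
Qed.

Lemma cos_2PI3 : cos (2*PI/3) = -1/2.
Proof.
  replace (2*PI/3) with (PI - PI/3) by field.
  rewrite Rtrigo_facts.cos_pi_minus, cos_PI3. lra.
Qed.

Theorem lemma2p9 (a : R) (ha1 : -1 <= a) (ha2 : a <= 1/3) (ha0 : a <> 0) :
  exists f : R -> R,
    (forall t, 2*PI/3 < t < PI -> continuity_pt f t) /\
    (forall t, 2*PI/3 < t < PI -> zdefined a t -> f t = zfun a t) /\
    (forall y, y < Ia_end a <-> exists t, 2*PI/3 < t < PI /\ f t = y).
Proof.
  exists (fun t => Pp a (Sc a (cos t))).
  split; [|split].
  - intros t ht. pose proof (cos_range t ht) as hc.
    change (continuity_pt (comp (Pp a) (comp (Sc a) cos)) t).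
    apply continuity_pt_comp.
    + apply continuity_pt_comp. apply continuity_cos.
      apply cS. nra. pose proof (D_pos a (cos t) ha1 ha2 hc). unfold comp. lra.
    + apply cP.
  - intros t ht hd. apply agree; auto. apply cos_range; auto.
  - intros y. split.
    + intros hy. destruct (bwd a y ha1 ha2 hy) as [c [hc hP]].
      exists (acos c).
      assert (hcc: cos (acos c) = c) by (apply cos_acos; lra).
      pose proof (acos_bound c). pose proof PI_RGT_0.
      split; [|rewrite hcc; exact hP].
      split.
      * destruct (Rlt_le_dec (2*PI/3) (acos c)) as [h|h]; auto.
        exfalso. destruct (Rle_lt_or_eq_dec _ _ h) as [h'|h'].
        -- assert (cos (2*PI/3) < cos (acos c)) by (apply cos_decreasing_1; lra).
           rewrite cos_2PI3, hcc in H1. lra.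
        -- rewrite h', cos_2PI3 in hcc. lra.
      * destruct (Rle_lt_or_eq_dec _ _ (proj2 H)) as [h|h]; auto.
        rewrite h, cos_PI in hcc. lra.
    + intros [t [ht <-]]. apply fwd; auto. apply cos_range; auto.
Qed.
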